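(* Let $R$ be a ring satisfying (C): every subring of $Q_{\max}^r(R)$ containing $R$ is flat as a left $R$-module, and (C'): every subring of $Q_{\max}^r(R)$ containing $R$ is flat as a right $R$-module. Then $Q_\omega=Q_{\mathrm{tot}}^r(R)$, where $\omega$ is the first infinite ordinal and $Q_\omega$ is defined in the context. In particular, every commutative ring $R$ satisfying (C) has $Q_\omega=Q_{\mathrm{tot}}^r(R)$.
   Context: Rings are associative with unit. For a Gabriel filter $\mathcal{E}$ of right ideals of $R$ (with associated hereditary torsion theory and torsion submodule $\mathcal{T}R$ of $R$), $R_{\mathcal{E}}=\varinjlim_{I\in\mathcal{E}}\mathrm{Hom}_R(I,R/\mathcal{T}R)$ is the right ring of quotients. Define, for ordinals $\alpha$, subrings $Q_\alpha$ of $Q_{\max}^r(R)$ containing $R$: $Q_0=Q_{\max}^r(R)$ with filter $\mathcal{E}_0$ the dense right ideals; $\mathcal{E}_{\alpha+1}=\{I: IQ_\alpha=Q_\alpha\}$ (the Gabriel filter of the torsion theory whose torsion modules are the $M$ with $M\otimes_R Q_\alpha=0$) and $Q_{\alpha+1}=R_{\mathcal{E}_{\alpha+1}}$; for limit $\alpha$, $\mathcal{E}_\alpha=\bigcap_{\beta<\alpha}\mathcal{E}_\beta$ and $Q_\alpha=R_{\mathcal{E}_\alpha}=\bigcap_{\beta<\alpha}Q_\beta$. In particular $Q_\omega=\bigcap_{n\ge0}Q_n$. $Q_{\mathrm{tot}}^r(R)$ is the total right ring of quotients: the largest ring extension $S\subseteq Q_{\max}^r(R)$ of $R$ such that $R\to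 S$ is a ring epimorphism and $S$ is flat as a left $R$-module. *)

(* Defs.v *)
(* Noncommutative rings R with unit; right R-modules are
   modelled as left modules over the converse ring R^c. *)
From HB Require Import structures.
From mathcomp Require Import all_boot all_order all_algebra.
Set Implicit Arguments. Unset Strict Implicit. Unset Printing Implicit Defensive.
Import GRing.Theory.
Local Open Scope ring_scope.

Section Quotients.
Variables (R Q : nzRingType) (phi : {rmorphism R -> Q}).

Definition right_ideal (I : R -> Prop) : Prop :=
  [/\ I 0, (forall x y, I x -> I y -> I (x - y)) & (forall x r, I x -> I (x * r))].

Definition dense_right_ideal (I : R -> Prop) : Prop :=
  right_ideal I /\
  forall x y : R, x != 0 -> exists r : R, x * r != 0 /\ I (y * r).

(* Q (with the embedding phi) is the maximal right ring of quotients of R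
   (Utumi/Lambek characterisation: Q_R is a rational extension of R_R, and
   every R-homomorphism from a dense right ideal into R is left
   multiplication by an element of Q). *)
Definition is_Qmax : Prop :=
  [/\ injective phi,
      (forall p q : Q, p != 0 ->
         exists r : R, p * phi r != 0 /\ exists s : R, q * phi r = phi s)
    & (forall (I : R -> Prop) (f : R -> R), dense_right_ideal I ->
         (forall x y, I x -> I y -> f (x + y) = f x + f y) ->
         (forall x r, I x -> f (x * r) = f x * r) ->
         exists q : Q, forall x, I x -> q * phi x = phi (f x))].

Definition subring_over (S : Q -> Prop) : Prop :=
  [/\ (forall r : R, S (phi r)),
      (forall x y, S x -> S y -> S (x - y))
    & (forall x y, S x -> S y -> S (x * y))].

(* For a right R-module M (left R^c-module) and S viewed as left R-module
   (r . s = phi r * s), a formal sum sum_i m_i (x) s_i is zero in M (x)_R S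
   iff every R-balanced map M x S -> A into an abelian group kills it. *)
Definition tensorL_zero (M : lmodType R^c) (S : Q -> Prop) (t : seq (M * Q))
  : Prop :=
  forall (A : zmodType) (b : M -> Q -> A),
    (forall m m' s, S s -> b (m + m') s = b m s + b m' s) ->
    (forall m s s', S s -> S s' -> b m (s + s') = b m s + b m s') ->
    (forall (r : R) m s, S s -> b ((r : R^c) *: m) s = b m (phi r * s)) ->
    \sum_(p <- t) b p.1 p.2 = 0.

Definition tensorR_zero (M : lmodType R) (S : Q -> Prop) (t : seq (Q * M))
  : Prop :=
  forall (A : zmodType) (b : Q -> M -> A),
    (forall s m m', S s -> b s (m + m') = b s m + b s m') ->
    (forall s s' m, S s -> S s' -> b (s + s') m = b s m + b s' m) ->
    (forall (r : R) s m, S s -> b (s * phi r) m = b s (r *: m)) ->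
    \sum_(p <- t) b p.1 p.2 = 0.

(* S is flat as a left R-module: - (x)_R S preserves monomorphisms *)
Definition flat_left (S : Q -> Prop) : Prop :=
  forall (M N : lmodType R^c) (g : {linear M -> N}), injective g ->
  forall t : seq (M * Q), (forall p, p \in t -> S p.2) ->
    tensorL_zero S [seq (g p.1, p.2) | p <- t] -> tensorL_zero S t.

Definition flat_right (S : Q -> Prop) : Prop :=
  forall (M N : lmodType R) (g : {linear M -> N}), injective g ->
  forall t : seq (Q * M), (forall p, p \in t -> S p.1) ->
    tensorR_zero S [seq (p.1, g p.2) | p <- t] -> tensorR_zero S t.

Definition condC : Prop := forall S, subring_over S -> flat_left S.
Definition condC' : Prop := forall S, subring_over S -> flat_right S.

Definition rhom_on (T : nzRingType) (S : Q -> Prop) (f : Q -> T) : Prop :=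
  f 1 = 1 /\ forall x y, S x -> S y -> f (x + y) = f x + f y /\ f (x * y) = f x * f y.

Definition ring_epi (S : Q -> Prop) : Prop :=
  forall (T : nzRingType) (f g : Q -> T), rhom_on S f -> rhom_on S g ->
    (forall r : R, f (phi r) = g (phi r)) -> forall s, S s -> f s = g s.

Definition flat_epi_subring (S : Q -> Prop) : Prop :=
  [/\ subring_over S, ring_epi S & flat_left S].

Definition is_Qtot (S : Q -> Prop) : Prop :=
  flat_epi_subring S /\
  forall S' : Q -> Prop, flat_epi_subring S' -> forall q, S' q -> S q.

(* I Q_alpha = Q_alpha  (I Q_alpha = finite sums of phi(i) q, i in I, q in Q_alpha) *)
Definition IP_eq (I : R -> Prop) (P : Q -> Prop) : Prop :=
  (forall t : seq (R * Q), (forall p, p \in t -> I p.1 /\ P p.2) ->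
     P (\sum_(p <- t) phi p.1 * p.2)) /\
  (forall q, P q -> exists t : seq (R * Q),
     (forall p, p \in t -> I p.1 /\ P p.2) /\ q = \sum_(p <- t) phi p.1 * p.2).

Definition E_next (P : Q -> Prop) (I : R -> Prop) : Prop :=
  right_ideal I /\ IP_eq I P.

(* R_E realised inside Q_max: the q in Q with q I contained in R for some I in E *)
Definition R_E (E : (R -> Prop) -> Prop) (q : Q) : Prop :=
  exists I : R -> Prop, E I /\ forall x, I x -> exists s : R, q * phi x = phi s.

Fixpoint Qn (n : nat) : Q -> Prop :=
  match n with
  | 0 => fun _ => True
  | n'.+1 => R_E (E_next (Qn n'))
  end.

Definition Qomega (q : Q) : Prop := forall n, Qn n q.

End Quotients.

(* Main.v *)
Require Import Defs.
From HB Require Import structures.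
From mathcomp Require Import all_boot all_order all_algebra.
From mathcomp Require Import boolp.
From Stdlib Require Import ClassicalEpsilon FunctionalExtensionality PropExtensionality ProofIrrelevance.
Set Implicit Arguments. Unset Strict Implicit. Unset Printing Implicit Defensive.
Import GRing.Theory.
Local Open Scope ring_scope.


Record submod (K : pzRingType) (V : lmodType K) := Submod {
  smP :> V -> Prop;
  sm0 : smP 0;
  smB : forall x y, smP x -> smP y -> smP (x - y);
  smZ : forall a x, smP x -> smP (a *: x) }.

Section Quot.
Variables (K : pzRingType) (V : lmodType K) (Us : submod V).
Local Notation U := (smP Us).
Let U0 := sm0 Us.
Let UB := @smB _ _ Us.
Let UZ := @smZ _ _ Us.

Lemma UN x : U x -> U (- x).
Proof. by move=> h; rewrite -sub0r; apply: UB. Qed.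
Lemma UD x y : U x -> U y -> U (x + y).
Proof. by move=> hx hy; rewrite -[y]opprK; apply: UB => //; apply: UN. Qed.

Definition qcls (x : V) : V -> Prop := fun y => U (y - x).
Definition qrep (x : V) : V := epsilon (inhabits (0:V)) (qcls x).

Lemma qrep_spec x : U (qrep x - x).
Proof.
rewrite /qrep; apply: (epsilon_spec (inhabits (0:V)) (qcls x)).
by exists x; rewrite /qcls subrr.
Qed.

Lemma qrep_eq x y : U (x - y) -> qrep x = qrep y.
Proof.
move=> h; rewrite /qrep; have -> // : qcls x = qcls y.
apply: functional_extensionality => z; apply: propositional_extensionality.
rewrite /qcls; split=> hz.
  by have := UD hz h; rewrite addrA subrK.
have := UB hz h; rewrite opprB addrA subrK. done.
Qed.

Lemma qrep_idem x : qrep (qrep x) = qrep x.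
Proof. exact: qrep_eq (qrep_spec x). Qed.

Record qT := QT { qv : V; qvP : qrep qv == qv }.
HB.instance Definition _ := [isSub for qv].
HB.instance Definition _ := [Choice of qT by <:].

Definition qpi (x : V) : qT := @QT (qrep x) (introT eqP (qrep_idem x)).

Lemma qpi_eqP x y : qpi x = qpi y <-> U (x - y).
Proof.
split=> [h|h]; last by apply: val_inj; rewrite /= (qrep_eq h).
have e : qrep x = qrep y by move: (congr1 qv h).
have h1 := qrep_spec x; have h2 := qrep_spec y.
have := UB h2 h1; rewrite e.
by rewrite opprB addrC addrA subrK.
Qed.

Lemma qpiK (a : qT) : qpi (qv a) = a.
Proof. by apply: val_inj => /=; apply/eqP; case: a. Qed.

Lemma qpi_surj (a : qT) : exists x, a = qpi x.
Proof. by exists (qv a); rewrite qpiK. Qed.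

Definition qzero := qpi 0.
Definition qadd (a b : qT) := qpi (qv a + qv b).
Definition qopp (a : qT) := qpi (- qv a).
Definition qscale (k : K) (a : qT) := qpi (k *: qv a).

Lemma qaddE x y : qadd (qpi x) (qpi y) = qpi (x + y).
Proof.
apply/qpi_eqP => /=.
have := UD (qrep_spec x) (qrep_spec y).
by rewrite opprD addrACA.
Qed.

Lemma qoppE x : qopp (qpi x) = qpi (- x).
Proof.
apply/qpi_eqP => /=; have := UN (qrep_spec x).
by rewrite opprB opprK addrC.
Qed.

Lemma qscaleE k x : qscale k (qpi x) = qpi (k *: x).
Proof.
apply/qpi_eqP => /=; have := UZ k (qrep_spec x).
by rewrite scalerBr.
Qed.

Lemma qaddA : associative qadd.
Proof.
move=> a b c; case: (qpi_surj a) => x ->; case: (qpi_surj b) => y ->.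
case: (qpi_surj c) => z ->; by rewrite !qaddE addrA.
Qed.
Lemma qaddC : commutative qadd.
Proof.
move=> a b; case: (qpi_surj a) => x ->; case: (qpi_surj b) => y ->.
by rewrite !qaddE addrC.
Qed.
Lemma qadd0 : left_id qzero qadd.
Proof. move=> a; case: (qpi_surj a) => x ->; by rewrite /qzero qaddE add0r. Qed.
Lemma qaddN : left_inverse qzero qopp qadd.
Proof. move=> a; case: (qpi_surj a) => x ->; by rewrite qoppE qaddE addNr. Qed.

HB.instance Definition _ := GRing.isZmodule.Build qT qaddA qaddC qadd0 qaddN.
Lemma qpiD x y : qpi (x + y) = qpi x + qpi y.
Proof. by rewrite -qaddE. Qed.

Lemma qscaleA a b v : qscale a (qscale b v) = qscale (a * b) v.
Proof. case: (qpi_surj v) => x ->; by rewrite !qscaleE scalerA. Qed.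
Lemma qscale1 : left_id 1 qscale.
Proof. move=> v; case: (qpi_surj v) => x ->; by rewrite !qscaleE scale1r. Qed.
Lemma qscaleDr : right_distributive qscale +%R.
Proof.
move=> a u v; case: (qpi_surj u) => x ->; case: (qpi_surj v) => y ->.
by rewrite -qpiD !qscaleE -qpiD scalerDr.
Qed.
Lemma qscaleDl v : {morph qscale^~ v: a b / a + b}.
Proof.
move=> a b; case: (qpi_surj v) => x ->.
by rewrite !qscaleE -qpiD scalerDl.
Qed.
HB.instance Definition _ := GRing.Zmodule_isLmodule.Build K qT qscaleA qscale1 qscaleDr qscaleDl.

Lemma qpiZ k x : qpi (k *: x) = k *: qpi x.
Proof. by rewrite -qscaleE. Qed.
Lemma qpi0 : qpi 0 = 0.
Proof. by []. Qed.
Lemma qpiN x : qpi (- x) = - qpi x.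
Proof. by rewrite -qoppE. Qed.
Lemma qpi_eq0 x : qpi x = 0 <-> U x.
Proof. by rewrite -qpi0 qpi_eqP subr0. Qed.

Lemma qv_pi x : U (qv (qpi x) - x).
Proof. exact: qrep_spec. Qed.
Lemma qvD (m m' : qT) : U (qv (m + m') - (qv m + qv m')).
Proof. by rewrite -{1}(qpiK m) -{1}(qpiK m') -qpiD; apply: qv_pi. Qed.
Lemma qvZ a (m : qT) : U (qv (a *: m) - a *: qv m).
Proof. by rewrite -{1}(qpiK m) -qpiZ; apply: qv_pi. Qed.
End Quot.

Section MkLin.
Variables (K : pzRingType) (V W : lmodType K) (f : V -> W).
Hypothesis (H : forall a x y, f (a *: x + y) = a *: f x + f y).
Definition mklin : V -> W := let _ := H in f.
HB.instance Definition _ := GRing.isLinear.Build K V W *:%R mklin H.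
End MkLin.

Section Lift.
Variables (K : pzRingType) (V W : lmodType K) (Us : submod V) (h : {linear V -> W}).
Hypothesis hU : forall x, Us x -> h x = 0.

Lemma qlift_E x : h (qv (qpi Us x)) = h x.
Proof.
have := hU (qrep_spec Us x); rewrite linearB /= => /eqP; rewrite subr_eq0 => /eqP.
by [].
Qed.

Lemma qlift_lin : forall a (x y : qT Us), h (qv (a *: x + y)) = a *: h (qv x) + h (qv y).
Proof.
move=> a x y; case: (qpi_surj x) => x' ->; case: (qpi_surj y) => y' ->.
by rewrite -qpiZ -qpiD !qlift_E linearD linearZ.
Qed.

Definition qlift : {linear qT Us -> W} := @mklin _ _ _ (fun a => h (qv a)) qlift_lin.

Lemma qliftE x : qlift (qpi Us x) = h x.
Proof. exact: qlift_E. Qed.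

Lemma qlift_inj : (forall x, h x = 0 -> Us x) -> injective qlift.
Proof.
move=> hk a c; case: (qpi_surj a) => x ->; case: (qpi_surj c) => y ->.
rewrite !qliftE => e; apply/qpi_eqP; apply: hk.
by rewrite linearB /= e subrr.
Qed.
End Lift.


Section EpiT.
Variables (R Q : nzRingType) (phi : {rmorphism R -> Q}) (S : Q -> Prop).
Hypothesis hS : subring_over phi S.
Variables (A : zmodType) (b : Q -> Q -> A).
Hypothesis bMl : forall x x' y, S x -> S x' -> S y -> b (x + x') y = b x y + b x' y.
Hypothesis bMr : forall x y y', S x -> S y -> S y' -> b x (y + y') = b x y + b x y'.
Hypothesis bRr : forall r x y, S x -> S y -> b (x * phi r) y = b x (phi r * y).

Lemma S_phi r : S (phi r). Proof. by case: hS. Qed.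
Lemma S_B x y : S x -> S y -> S (x - y). Proof. by case: hS => _ h _; apply: h. Qed.
Lemma S_M x y : S x -> S y -> S (x * y). Proof. by case: hS => _ _ h; apply: h. Qed.
Lemma S_0 : S 0. Proof. by rewrite -(rmorph0 phi); apply: S_phi. Qed.
Lemma S_1 : S 1. Proof. by rewrite -(rmorph1 phi); apply: S_phi. Qed.
Lemma S_N x : S x -> S (- x). Proof. by move=> h; rewrite -sub0r; apply: S_B => //; apply: S_0. Qed.
Lemma S_D x y : S x -> S y -> S (x + y).
Proof. by move=> hx hy; rewrite -[y]opprK; apply: S_B => //; apply: S_N. Qed.

Definition ST := {x : Q | S x}.
Lemma ST_inj (u v : ST) : proj1_sig u = proj1_sig v -> u = v.
Proof. case: u => x hx; case: v => y hy /= e; subst y; by rewrite (proof_irrelevance _ hx hy). Qed.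
Definition smul (u v : ST) : ST := exist _ _ (S_M (proj2_sig u) (proj2_sig v)).
Definition sone : ST := exist _ _ S_1.
Lemma smulA u v w : smul u (smul v w) = smul (smul u v) w.
Proof. by apply: ST_inj => /=; rewrite mulrA. Qed.
Lemma smul1 u : smul u sone = u. Proof. by apply: ST_inj => /=; rewrite mulr1. Qed.
Lemma s1mul u : smul sone u = u. Proof. by apply: ST_inj => /=; rewrite mul1r. Qed.

Definition sadd (u v : ST) : ST := exist _ _ (S_D (proj2_sig u) (proj2_sig v)).
Definition sopp (u : ST) : ST := exist _ _ (S_N (proj2_sig u)).
Definition szero : ST := exist _ _ S_0.

Definition biadd (F : ST -> ST -> A) :=
  (forall u u' v, F (sadd u u') v = F u v + F u' v) /\
  (forall u v v', F u (sadd v v') = F u v + F u v').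

Record TT := MkT { tq : ST; tf : ST -> ST -> A; tH : biadd tf }.
HB.instance Definition _ := gen_eqMixin TT.
HB.instance Definition _ := gen_choiceMixin TT.

Lemma TT_eq (x y : TT) : proj1_sig (tq x) = proj1_sig (tq y) -> (forall u v, tf x u v = tf y u v) -> x = y.
Proof.
case: x => a F HF; case: y => c G HG /= e h.
have ? := ST_inj e; subst c.
have ? : F = G.
  by apply: functional_extensionality => u; apply: functional_extensionality => v.
subst G; by rewrite (proof_irrelevance _ HF HG).
Qed.

Lemma sadd_mull u u' w : smul (sadd u u') w = sadd (smul u w) (smul u' w).
Proof. by apply: ST_inj => /=; rewrite mulrDl. Qed.
Lemma sadd_mulr w u u' : smul w (sadd u u') = sadd (smul w u) (smul w u').
Proof. by apply: ST_inj => /=; rewrite mulrDr. Qed.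

Lemma biadd0 : biadd (fun _ _ => 0).
Proof. by split=> *; rewrite addr0. Qed.
Lemma biaddD F G : biadd F -> biadd G -> biadd (fun u v => F u v + G u v).
Proof.
move=> [F1 F2] [G1 G2]; split=> *; rewrite ?F1 ?G1 ?F2 ?G2 addrACA //.
Qed.
Lemma biaddN F : biadd F -> biadd (fun u v => - F u v).
Proof. by move=> [F1 F2]; split=> *; rewrite ?F1 ?F2 opprD. Qed.
Lemma biaddL F x : biadd F -> biadd (fun u v => F (smul u x) v).
Proof. by move=> [F1 F2]; split=> *; rewrite ?sadd_mull ?F1 ?F2. Qed.
Lemma biaddR F x : biadd F -> biadd (fun u v => F u (smul x v)).
Proof. by move=> [F1 F2]; split=> *; rewrite ?sadd_mulr ?F1 ?F2. Qed.

Definition tzero := MkT szero biadd0.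
Definition tadd x y := MkT (sadd (tq x) (tq y)) (biaddD (tH x) (tH y)).
Definition topp x := MkT (sopp (tq x)) (biaddN (tH x)).
Definition tone := MkT sone biadd0.
Definition tmul x y := MkT (smul (tq x) (tq y))
   (biaddD (biaddL (tq x) (tH y)) (biaddR (tq y) (tH x))).

Lemma taddA : associative tadd.
Proof. by move=> x y z; apply: TT_eq => /= [|u v]; rewrite addrA. Qed.
Lemma taddC : commutative tadd.
Proof. by move=> x y; apply: TT_eq => /= [|u v]; rewrite addrC. Qed.
Lemma tadd0 : left_id tzero tadd.
Proof. by move=> x; apply: TT_eq => /= [|u v]; rewrite add0r. Qed.
Lemma taddN : left_inverse tzero topp tadd.
Proof. by move=> x; apply: TT_eq => /= [|u v]; rewrite addNr. Qed.
Lemma tmulA : associative tmul.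
Proof.
move=> x y z; apply: TT_eq => /= [|u v]; first by rewrite mulrA.
by rewrite !smulA addrA; congr (_ + _ + _).
Qed.
Lemma tmul1 : left_id tone tmul.
Proof. by move=> x; apply: TT_eq => /= [|u v]; rewrite ?mul1r // smul1 addr0. Qed.
Lemma tmulr1 : right_id tone tmul.
Proof. by move=> x; apply: TT_eq => /= [|u v]; rewrite ?mulr1 // s1mul add0r. Qed.
Lemma tmulDl : left_distributive tmul tadd.
Proof.
move=> x y z; apply: TT_eq => /= [|u v]; first by rewrite mulrDl.
rewrite sadd_mulr (proj1 (tH z)) addrACA //.
Qed.
Lemma tmulDr : right_distributive tmul tadd.
Proof.
move=> x y z; apply: TT_eq => /= [|u v]; first by rewrite mulrDr.
rewrite sadd_mull (proj2 (tH x)) addrACA //.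
Qed.

Lemma tone_neq0 : tone != tzero.
Proof.
apply/eqP => /(congr1 (fun x => proj1_sig (tq x))) /= /eqP; by rewrite oner_eq0.
Qed.

HB.instance Definition _ := GRing.isNzRing.Build TT taddA taddC tadd0 taddN
  tmulA tmul1 tmulr1 tmulDl tmulDr tone_neq0.

Definition ins (x : Q) : ST :=
  match pselect (S x) with left h => exist _ x h | right _ => szero end.
Lemma insE x (h : S x) : proj1_sig (ins x) = x.
Proof. by rewrite /ins; case: pselect. Qed.

Definition E (u v : ST) := b (proj1_sig u) (proj1_sig v).
Lemma HE : biadd E.
Proof.
split=> [u u' v|u v v']; rewrite /E /=.
  by apply: bMl; apply: proj2_sig.
by apply: bMr; apply: proj2_sig.
Qed.

Definition tf_ (x : Q) : TT := MkT (ins x) biadd0.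
Definition tg_ (x : Q) : TT :=
  MkT (ins x) (biaddD (biaddL (ins x) HE) (biaddN (biaddR (ins x) HE))).

Lemma rhom_f : rhom_on S tf_.
Proof.
split.
  by apply: TT_eq => //=; rewrite insE //; apply: S_1.
move=> x y hx hy; split.
  apply: TT_eq => /= [|u v]; last by rewrite addr0.
  by rewrite !insE //; apply: S_D.
apply: TT_eq => /= [|u v]; last by rewrite addr0.
by rewrite !insE //; apply: S_M.
Qed.

Lemma rhom_g : rhom_on S tg_.
Proof.
split.
  apply: TT_eq => /= [|u v]; first by rewrite insE //; apply: S_1.
  have -> : ins 1 = sone by apply: ST_inj; rewrite insE //; apply: S_1.
  by rewrite smul1 s1mul subrr.
move=> x y hx hy; split.
  apply: TT_eq => /= [|u v]; first by rewrite !insE //; apply: S_D.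
  have -> : ins (x + y) = sadd (ins x) (ins y) by apply: ST_inj; rewrite /= !insE //; apply: S_D.
  rewrite sadd_mulr sadd_mull (proj1 HE) (proj2 HE) opprD.
  by rewrite addrACA.
apply: TT_eq => /= [|u v]; first by rewrite !insE //; apply: S_M.
have -> : ins (x * y) = smul (ins x) (ins y) by apply: ST_inj; rewrite /= !insE //; apply: S_M.
by rewrite !smulA addrA subrK.
Qed.

Lemma fg_agree r : tf_ (phi r) = tg_ (phi r).
Proof.
apply: TT_eq => //= u v.
rewrite /E /= !insE; last by apply: S_phi.
rewrite bRr ?subrr //; by apply: proj2_sig.
Qed.

Lemma epi_balanced : ring_epi phi S -> forall s, S s -> b s 1 = b 1 s.
Proof.
move=> epi s hs.
have := epi _ _ _ rhom_f rhom_g fg_agree s hs.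
move=> /(congr1 (fun x => tf x sone sone)) /=.
rewrite /E /= !insE // mul1r mulr1 => /eqP; rewrite eq_sym subr_eq0 => /eqP.
by [].
Qed.
End EpiT.


Section Mods.
Variables (R Q : nzRingType) (phi : {rmorphism R -> Q}).

Definition QR (f : {rmorphism R -> Q}) : Type := Q.
HB.instance Definition _ := GRing.Zmodule.on (QR phi).
Definition qrs (r : R^c) (x : QR phi) : QR phi := (x : Q) * phi r.
Lemma qrsA a b v : qrs a (qrs b v) = qrs (a * b) v.
Proof. by rewrite /qrs -mulrA -rmorphM. Qed.
Lemma qrs1 : left_id 1 qrs.
Proof. by move=> v; rewrite /qrs rmorph1 mulr1. Qed.
Lemma qrsDr : right_distributive qrs +%R.
Proof. by move=> a u v; rewrite /qrs mulrDl. Qed.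
Lemma qrsDl v : {morph qrs^~ v: a b / a + b}.
Proof. by move=> a b; rewrite /qrs rmorphD mulrDr. Qed.
HB.instance Definition _ := GRing.Zmodule_isLmodule.Build R^c (QR phi) qrsA qrs1 qrsDr qrsDl.

Definition QL (f : {rmorphism R -> Q}) : Type := Q.
HB.instance Definition _ := GRing.Zmodule.on (QL phi).
Definition qls (r : R) (x : QL phi) : QL phi := phi r * (x : Q).
Lemma qlsA a b v : qls a (qls b v) = qls (a * b) v.
Proof. by rewrite /qls mulrA -rmorphM. Qed.
Lemma qls1 : left_id 1 qls.
Proof. by move=> v; rewrite /qls rmorph1 mul1r. Qed.
Lemma qlsDr : right_distributive qls +%R.
Proof. by move=> a u v; rewrite /qls mulrDr. Qed.
Lemma qlsDl v : {morph qls^~ v: a b / a + b}.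
Proof. by move=> a b; rewrite /qls rmorphD mulrDl. Qed.
HB.instance Definition _ := GRing.Zmodule_isLmodule.Build R (QL phi) qlsA qls1 qlsDr qlsDl.
End Mods.

Section Main.
Variables (R Q : nzRingType) (phi : {rmorphism R -> Q}).

Lemma QRZ (r : R) (x : QR phi) : ((r : R^c) *: x : QR phi) = (x : Q) * phi r.
Proof. by []. Qed.
Lemma QLZ (r : R) (x : QL phi) : (r *: x : QL phi) = phi r * (x : Q).
Proof. by []. Qed.

Definition ridsub (J : R -> Prop) (hJ : right_ideal J) : submod R^c^o.
Proof.
refine (@Submod _ R^c^o J _ _ _); case: hJ => h0 hB hZ //.
by move=> a x hx; apply: hZ.
Defined.
Definition Rm J (hJ : right_ideal J) := qT (ridsub hJ).

Definition IPin (J : R -> Prop) (P : Q -> Prop) (q : Q) :=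
  exists t : seq (R * Q), (forall p, p \in t -> J p.1 /\ P p.2) /\
    q = \sum_(p <- t) phi p.1 * p.2.

Section IP.
Variables (J : R -> Prop) (P : Q -> Prop).
Hypotheses (hJ : right_ideal J) (hP : subring_over phi P).

Lemma IPin0 : IPin J P 0.
Proof. by exists [::]; rewrite big_nil. Qed.
Lemma IPinD x y : IPin J P x -> IPin J P y -> IPin J P (x + y).
Proof.
move=> [t1 [h1 ->]] [t2 [h2 ->]]; exists (t1 ++ t2); split; last by rewrite big_cat.
by move=> p; rewrite mem_cat => /orP [] ?; [apply: h1|apply: h2].
Qed.
Lemma IPin_mulr x z : IPin J P x -> P z -> IPin J P (x * z).
Proof.
move=> [t [h ->]] hz; exists [seq (p.1, p.2 * z) | p <- t]; split.
  move=> p /mapP [p' hp' ->] /=; have [h1 h2] := h p' hp'; split=> //.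
  exact: (S_M hP h2 hz).
by rewrite big_map mulr_suml; apply: eq_bigr => p _; rewrite mulrA.
Qed.
Lemma IPinN x : IPin J P x -> IPin J P (- x).
Proof.
move=> h; rewrite -mulrN1; apply: IPin_mulr => //; apply: (S_N hP); exact: (S_1 hP).
Qed.
Lemma IPinB x y : IPin J P x -> IPin J P y -> IPin J P (x - y).
Proof. by move=> hx hy; apply: IPinD => //; apply: IPinN. Qed.
Lemma IPin_gen j p : J j -> P p -> IPin J P (phi j * p).
Proof. by move=> hj hp; exists [:: (j, p)]; rewrite big_seq1; split=> // q; rewrite inE => /eqP ->. Qed.
Lemma IPin_sum (I : eqType) (t : seq I) (F : I -> Q) :
  (forall i, i \in t -> IPin J P (F i)) -> IPin J P (\sum_(i <- t) F i).
Proof.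
elim: t => [|i t IH] h; first by rewrite big_nil; apply: IPin0.
rewrite big_cons; apply: IPinD; first by apply: h; rewrite inE eqxx.
by apply: IH => k hk; apply: h; rewrite inE hk orbT.
Qed.
Lemma IPin_in q : IPin J P q -> P q.
Proof.
move=> [t [h ->]]; elim: t h => [|p t IH] h; first by rewrite big_nil; apply: (S_0 hP).
rewrite big_cons; apply: (S_D hP).
  have [h1 h2] := h p (mem_head _ _); apply: (S_M hP) h2; exact: (S_phi hP).
by apply: IH => k hk; apply: h; rewrite inE hk orbT.
Qed.
End IP.

Lemma IPin_sub (J J' : R -> Prop) (P P' : Q -> Prop) q :
  (forall x, J x -> J' x) -> (forall x, P x -> P' x) -> IPin J P q -> IPin J' P' q.
Proof.
move=> hJ hP [t [h ->]]; exists t; split=> // p hp; have [? ?] := h p hp; split; auto.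
Qed.

Lemma add_zero (A : zmodType) (x : A) : x = x + x -> x = 0.
Proof. by move=> h; apply: (addrI x); rewrite addr0 -h. Qed.

Lemma sum_add2 (P : Q -> Prop) (hP : subring_over phi P) (A : zmodType) (c : Q -> A)
  (hc : forall s s', P s -> P s' -> c (s + s') = c s + c s')
  (I : eqType) (t : seq I) (F : I -> Q) :
  (forall i, i \in t -> P (F i)) -> c (\sum_(i <- t) F i) = \sum_(i <- t) c (F i).
Proof.
have c0 : c 0 = 0.
  by apply: add_zero; have h0 := S_0 hP; rewrite -{1}(addr0 0) hc.
elim: t => [|i t IH] h; first by rewrite !big_nil.
have h' : forall k, k \in t -> P (F k) by move=> k hk; apply: h; rewrite inE hk orbT.
rewrite !big_cons hc; first by rewrite IH.
  by apply: h; rewrite inE eqxx.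
elim: t {IH h} h' => [|k t IH] h; first by rewrite big_nil; apply: (S_0 hP).
rewrite big_cons; apply: (S_D hP); first by apply: h; rewrite inE eqxx.
by apply: IH => k' hk'; apply: h; rewrite inE hk' orbT.
Qed.

Section L12.
Variables (J : R -> Prop) (hJ : right_ideal J) (P : Q -> Prop) (hP : subring_over phi P).

Lemma L1 : IPin J P 1 ->
  forall (A : zmodType) (b : Rm hJ -> Q -> A),
  (forall m m' s, P s -> b (m + m') s = b m s + b m' s) ->
  (forall m s s', P s -> P s' -> b m (s + s') = b m s + b m s') ->
  (forall (r : R) m s, P s -> b ((r : R^c) *: m) s = b m (phi r * s)) ->
  forall z, P z -> b (qpi _ 1) z = 0.
Proof.
move=> [t [ht e1]] A b bA1 bA2 bR z hz.
have -> : z = \sum_(p <- t) phi p.1 * (p.2 * z).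
  by rewrite -{1}(mul1r z) e1 mulr_suml; apply: eq_bigr => p _; rewrite mulrA.
have hin : forall p, p \in t -> P (p.2 * z) by move=> p /ht [_ h]; apply: (S_M hP h hz).
rewrite (@sum_add2 P hP A (b (qpi _ 1))); last first.
- move=> p hp; apply: (S_M hP); first exact: (S_phi hP).
  exact: hin.
- by move=> s s' hs hs'; apply: bA2.
rewrite big1_seq // => p /andP [_ hp].
rewrite -bR; last exact: hin.
have -> : (p.1 : R^c) *: qpi (ridsub hJ) 1 = 0.
  rewrite -qpiZ; apply/qpi_eq0 => /=.
  have [hj _] := ht p hp.
  by change (J (1 * p.1)); rewrite mul1r.
apply: add_zero; rewrite -bA1 ?addr0 //; exact: hin.
Qed.

Definition IPsub : submod (QR phi).
Proof.
refine (@Submod _ (QR phi) (IPin J P) (IPin0 J P) (fun x y => @IPinB J P hP x y) _).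
move=> a x hx; rewrite QRZ; apply: IPin_mulr => //; exact: (S_phi hP).
Defined.

Lemma L2 : tensorL_zero phi P [:: (qpi (ridsub hJ) 1, 1)] -> IPin J P 1.
Proof.
move=> H.
pose b := fun (m : Rm hJ) (y : Q) => qpi IPsub ((phi (qv m) * y : Q) : QR phi).
have := H _ b.
have hS1 := S_1 hP.
rewrite big_seq1 /= /b; move=> /(_ _ _ _) h.
have {h} : qpi IPsub ((phi (qv (qpi (ridsub hJ) 1)) * 1 : Q) : QR phi) = 0.
  apply: h.
  - move=> m m' s hs; rewrite -qpiD; apply/qpi_eqP => /=.
    rewrite -mulrDl -mulrBl -rmorphD -rmorphB; apply: IPin_gen => //.
    by have := qvD m m'.
  - by move=> m s s' hs hs'; rewrite -qpiD mulrDr.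
  - move=> r m s hs; apply/qpi_eqP => /=.
    rewrite mulrA -rmorphM -mulrBl -rmorphB; apply: IPin_gen => //.
    by have := qvZ (r : R^c) m.
move=> /qpi_eq0 /= h.
have e : (1 : Q) = phi (qv (qpi (ridsub hJ) 1)) * 1 - phi (qv (qpi (ridsub hJ) 1) - 1) * 1.
  by rewrite -mulrBl -rmorphB opprB addrC subrK rmorph1 mulr1.
rewrite e; apply: IPinB => //; apply: IPin_gen => //.
by have := qv_pi (ridsub hJ) 1.
Qed.
End L12.

Lemma Enext_iff P (hP : subring_over phi P) I :
  E_next phi P I <-> right_ideal I /\ IPin I P 1.
Proof.
split.
- by case=> hI [c1 c2]; split=> //; apply: c2; exact: (S_1 hP).
- case=> hI h1; split=> //; split.
  + by move=> t ht; apply: (@IPin_in I P hP); exists t; split.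
  + by move=> q hq; have := IPin_mulr hP h1 hq; rewrite mul1r.
Qed.

Lemma rid_cap (I1 I2 : R -> Prop) : right_ideal I1 -> right_ideal I2 -> right_ideal (fun x => I1 x /\ I2 x).
Proof.
case=> a0 aB aZ; case=> b0 bB bZ; split=> //.
  by move=> x y [? ?] [? ?]; split; [apply: aB|apply: bB].
by move=> x r [? ?]; split; [apply: aZ|apply: bZ].
Qed.

Lemma Enext_cap P (hP : subring_over phi P) (flP : flat_left phi P) I1 I2
  (h1 : right_ideal I1) (h2 : right_ideal I2) :
  IPin I1 P 1 -> IPin I2 P 1 -> IPin (fun x => I1 x /\ I2 x) P 1.
Proof.
have h12 := rid_cap h1 h2.
move=> e1 e2; apply: (@L2 _ h12 _ hP).
pose hh : R^c^o -> (Rm h1 * Rm h2)%type := fun x => (qpi (ridsub h1) x, qpi (ridsub h2) x).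
have hlin : forall a x y, hh (a *: x + y) = a *: hh x + hh y.
  by move=> a x y; rewrite /hh !qpiD !qpiZ.
pose hL := mklin hlin.
have hU : forall x, ridsub h12 x -> hL x = 0.
  move=> x [hx1 hx2]; rewrite /hL /mklin /hh /=.
  have -> : qpi (ridsub h1) x = 0 by apply/qpi_eq0.
  have -> : qpi (ridsub h2) x = 0 by apply/qpi_eq0.
  by [].
pose g := qlift hU.
have ginj : injective g.
  apply: qlift_inj => x; rewrite /hL /mklin /hh /= => e.
  split; [apply/(qpi_eq0 (ridsub h1))|apply/(qpi_eq0 (ridsub h2))].
    exact: (congr1 fst e).
  exact: (congr1 snd e).
apply: (flP _ _ g ginj) => [p|]; first by rewrite inE => /eqP -> /=; exact: (S_1 hP).
rewrite /= qliftE.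
move=> A b bA1 bA2 bR; rewrite big_seq1 /=.
have -> : mklin hlin 1 = (qpi (ridsub h1) 1, 0) + (0, qpi (ridsub h2) 1).
  by apply: injective_projections => /=; rewrite ?addr0 ?add0r.
have hS1 := S_1 hP.
rewrite bA1 //.
rewrite (@L1 _ h1 _ hP e1 A (fun m y => b (m, 0) y)) //; last first.
- move=> r m s hs; rewrite -bR //; congr b; by apply: injective_projections => /=; rewrite ?scaler0.
- by move=> m s s' hs hs'; rewrite bA2.
- by move=> m m' s hs; rewrite -bA1 //; congr b; by apply: injective_projections => /=; rewrite ?addr0.
rewrite (@L1 _ h2 _ hP e2 A (fun m y => b (0, m) y)) ?addr0 //.
- by move=> m m' s hs; rewrite -bA1 //; congr b; by apply: injective_projections => /=; rewrite ?addr0.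
- by move=> m s s' hs hs'; rewrite bA2.
- move=> r m s hs; rewrite -bR //; congr b; by apply: injective_projections => /=; rewrite ?scaler0.
Qed.

Definition kprod (I1 I2 : R -> Prop) (q2 : Q) (x : R) :=
  I2 x /\ exists s, q2 * phi x = phi s /\ I1 s.

Lemma rid_kprod I1 I2 q2 : right_ideal I1 -> right_ideal I2 -> right_ideal (kprod I1 I2 q2).
Proof.
case=> a0 aB aZ; case=> b0 bB bZ; split.
- by split=> //; exists 0; rewrite !rmorph0 mulr0.
- move=> x y [hx [sx [ex hsx]]] [hy [sy [ey hsy]]]; split; first exact: bB.
  by exists (sx - sy); rewrite !rmorphB mulrBr ex ey; split=> //; apply: aB.
- move=> x r [hx [sx [ex hsx]]]; split; first exact: bZ.
  by exists (sx * r); rewrite !rmorphM mulrA ex; split=> //; apply: aZ.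
Qed.

Lemma rid_left (K : R -> Prop) (b0 : R) : right_ideal K -> right_ideal (fun x => K (b0 * x)).
Proof.
case=> k0 kB kZ; split; first by rewrite mulr0.
  by move=> x y hx hy; rewrite mulrBr; apply: kB.
by move=> x r hx; rewrite mulrA; apply: kZ.
Qed.

Lemma Enext_mul P (hP : subring_over phi P) (flP : flat_left phi P) (phinj : injective phi)
  I1 I2 (h1 : right_ideal I1) (h2 : right_ideal I2) q2 :
  IPin I1 P 1 -> IPin I2 P 1 -> (forall x, I2 x -> exists s, q2 * phi x = phi s) ->
  IPin (kprod I1 I2 q2) P 1.
Proof.
move=> e1 [t [ht et]] hq2.
have hK := rid_kprod q2 h1 h2.
have hS1 := S_1 hP.
rewrite et; apply: IPin_sum => p hp.
have [hp1 hp2] := ht p hp.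
apply: (IPin_mulr hP) => //.
move: (p.1) hp1 => b0 hb0.
have hKb := rid_left b0 hK.
pose sel (y : R) := epsilon (inhabits (0 : R)) (fun s => q2 * phi y = phi s).
have sel_spec : forall y, I2 y -> q2 * phi y = phi (sel y).
  move=> y hy; rewrite /sel; apply: (epsilon_spec (inhabits (0 : R)) (fun s => q2 * phi y = phi s)).
  exact: hq2.
have sel_eq : forall y s, I2 y -> q2 * phi y = phi s -> sel y = s.
  by move=> y s hy e; apply: phinj; rewrite -sel_spec.
have hI2b : forall x, I2 (b0 * x) by move=> x; case: h2 => _ _ hZ; apply: hZ.
pose hh : R^c^o -> Rm h1 := fun x => qpi (ridsub h1) (sel (b0 * x)).
have hlin : forall a x y, hh (a *: x + y) = a *: hh x + hh y.
  move=> a x y; rewrite /hh -qpiZ -qpiD; congr qpi.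
  apply: sel_eq; first exact: hI2b.
  change (q2 * phi (b0 * ((x : R) * (a : R) + (y : R))) = phi (sel (b0 * (x : R)) * (a : R) + sel (b0 * (y : R)))).
  rewrite [RHS]rmorphD [phi (sel _ * _)]rmorphM -!sel_spec; try exact: hI2b.
  by rewrite -mulrA -rmorphM -mulrDr -rmorphD mulrDr mulrA.
pose hL := mklin hlin.
have hU : forall x, ridsub hKb x -> hL x = 0.
  move=> x [hx [s [es hs]]]; rewrite /hL /mklin /hh /=.
  by apply/qpi_eq0; rewrite (sel_eq _ _ hx es).
pose g := qlift hU.
have ginj : injective g.
  apply: qlift_inj => x; rewrite /hL /mklin /hh /= => /qpi_eq0 /= h.
  split; first exact: hI2b.
  by exists (sel (b0 * x)); split=> //; apply: sel_spec; apply: hI2b.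
have : IPin (fun x => kprod I1 I2 q2 (b0 * x)) P 1.
  apply: (@L2 _ hKb _ hP).
  apply: (flP _ _ g ginj) => [p'|]; first by rewrite inE => /eqP -> /=.
  rewrite /= qliftE.
  move=> A b bA1 bA2 bR; rewrite big_seq1 /=.
  have sc : forall a : R, ((a : R^c) *: (1 : R^c^o) : R) = a by move=> a; exact: mul1r.
  have -> : mklin hlin 1 = (sel (b0 * 1) : R^c) *: qpi (ridsub h1) 1.
    by rewrite -qpiZ /mklin /hh sc.
  rewrite bR // (@L1 _ h1 _ hP e1 A b) //.
  by apply: (S_M hP) => //; apply: (S_phi hP).
move=> [t' [ht' et']]; exists [seq (b0 * p'.1, p'.2) | p' <- t']; split.
  by move=> p' /mapP [p'' hp'' ->] /=; apply: ht'.
rewrite -[phi b0]mulr1 et' big_map mulr_sumr; apply: eq_bigr => p' _.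
by rewrite rmorphM mulrA.
Qed.
End Main.


Section Main2.
Variables (R Q : nzRingType) (phi : {rmorphism R -> Q}).
Hypotheses (phinj : injective phi) (hC : condC phi).

Lemma rid_all : right_ideal (fun _ : R => True).
Proof. by split. Qed.

Lemma RE_sub P (hP : subring_over phi P) : subring_over phi (R_E phi (E_next phi P)).
Proof.
have flP := hC hP.
split.
- move=> r; exists (fun _ => True); split.
    apply/(Enext_iff hP); split; first exact: rid_all.
    have := @IPin_gen _ _ phi (fun _ => True) P 1 1 I (S_1 hP).
    by rewrite rmorph1 mulr1.
  by move=> x _; exists (r * x); rewrite rmorphM.
- move=> x y [I1 [e1 hx]] [I2 [e2 hy]].
  move/(Enext_iff hP): e1 => [h1 i1]; move/(Enext_iff hP): e2 => [h2 i2].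
  exists (fun z => I1 z /\ I2 z); split.
    apply/(Enext_iff hP); split; first exact: rid_cap.
    exact: Enext_cap.
  move=> z [z1 z2]; case: (hx z z1) => s1 e; case: (hy z z2) => s2 e'.
  by exists (s1 - s2); rewrite mulrBl e e' rmorphB.
- move=> x y [I1 [e1 hx]] [I2 [e2 hy]].
  move/(Enext_iff hP): e1 => [h1 i1]; move/(Enext_iff hP): e2 => [h2 i2].
  exists (kprod phi I1 I2 y); split.
    apply/(Enext_iff hP); split; first exact: rid_kprod.
    exact: Enext_mul.
  move=> z [z2 [s [es hs]]]; case: (hx s hs) => s' e.
  by exists s'; rewrite -mulrA es e.
Qed.

Lemma Qn_sub n : subring_over phi (Qn phi n).
Proof.
elim: n => [|n IH] /=; first by split.
exact: RE_sub.
Qed.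

Lemma Qomega_sub : subring_over phi (Qomega phi).
Proof.
split.
- move=> r n; by case: (Qn_sub n).
- move=> x y hx hy n; by case: (Qn_sub n) => _ h _; apply: h.
- move=> x y hx hy n; by case: (Qn_sub n) => _ _ h; apply: h.
Qed.
End Main2.


Definition kersub (K : pzRingType) (V W : lmodType K) (h : {linear V -> W}) : submod V.
Proof.
refine (@Submod _ V (fun x => h x = 0) _ _ _).
- exact: linear0.
- by move=> x y hx hy; rewrite linearB /= hx hy subrr.
- by move=> a x hx; rewrite linearZ /= hx scaler0.
Defined.

Section Main3.
Variables (R Q : nzRingType) (phi : {rmorphism R -> Q}).

Lemma sub_all : subring_over phi (fun _ => True).
Proof. by split. Qed.

Lemma stepC s : Qn phi 1 s ->
  tensorL_zero phi (fun _ => True) [:: ((s : QR phi), 1); ((- (1 : Q) : QR phi), s)].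
Proof.
move=> [J0 [[hJ0 [c1 c2]] hs]] A b bA1 bA2 bR.
have [t [ht et]] := c2 1 I.
rewrite big_cons big_seq1 /=.
have b0 : forall y, b 0 y = 0 by move=> y; apply: add_zero; rewrite -bA1 ?addr0.
have bN : b (- (1 : Q) : QR phi) s = - b ((1 : Q) : QR phi) s.
  have := bA1 ((1 : Q) : QR phi) (- (1 : Q) : QR phi) s I; rewrite addrN b0 => /eqP.
  by rewrite eq_sym addrC addr_eq0 => /eqP.
suff -> : b (s : QR phi) 1 = b ((1 : Q) : QR phi) s by rewrite bN ?addr0 subrr.
rewrite [X in b _ X = _]et (@sum_add2 _ _ phi _ sub_all _ (b (s : QR phi))) //; last by move=> *; apply: bA2.
have e2 : (s : Q) = \sum_(p <- t) s * (phi p.1 * p.2) by rewrite -mulr_sumr -et mulr1.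
rewrite [X in _ = b _ X]e2 (@sum_add2 _ _ phi _ sub_all _ (b ((1 : Q) : QR phi))) //; last by move=> *; apply: bA2.
apply: eq_big_seq => p hp.
have [r er] := hs p.1 (ht p hp).1.
rewrite -bR //.
have -> : (p.1 : R^c) *: (s : QR phi) = (r : R^c) *: ((1 : Q) : QR phi).
  by rewrite !QRZ mul1r er.
by rewrite bR // mulrA er.
Qed.

Section StepB.
Variables (S : Q -> Prop) (hS : subring_over phi S) (s : Q) (hs : S s).
Hypothesis flT : flat_left phi (fun _ => True).

Definition hBf (x : (R^c^o * R^c^o)%type) : QR phi := phi x.1 + s * phi x.2.
Lemma hBf_lin a x y : hBf (a *: x + y) = a *: hBf x + hBf y.
Proof.
case: x => x1 x2; case: y => y1 y2; rewrite /hBf /=.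
change (phi ((x1 : R) * (a : R) + y1) + s * phi ((x2 : R) * (a : R) + y2) =
  (phi x1 + s * phi x2) * phi a + (phi y1 + s * phi y2)).
by rewrite !rmorphD !rmorphM mulrDr mulrDl !mulrA addrACA.
Qed.
Definition hB := mklin hBf_lin.
Definition MB := qT (kersub hB).
Lemma hBU x : kersub hB x -> hB x = 0. Proof. by []. Qed.
Definition gB := qlift hBU.
Lemma gB_inj : injective gB. Proof. by apply: qlift_inj. Qed.
Lemma gBE x : gB (qpi (kersub hB) x) = hBf x.
Proof. exact: qliftE. Qed.
Lemma gBS m : S (gB m).
Proof.
case: (qpi_surj m) => [[a c] ->]; rewrite gBE /hBf /=.
apply: (S_D hS); first exact: (S_phi hS).
by apply: (S_M hS) => //; exact: (S_phi hS).
Qed.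

Lemma stepB :
  tensorL_zero phi (fun _ => True) [:: ((s : QR phi), 1); ((- (1 : Q) : QR phi), s)] ->
  tensorR_zero phi S [:: (s, ((1 : Q) : QL phi)); (- 1, (s : QL phi))].
Proof.
move=> H.
pose ns := qpi (kersub hB) (0, 1). pose n1 := qpi (kersub hB) (1, 0).
have gns : gB ns = s by rewrite gBE /hBf /= rmorph0 rmorph1 add0r mulr1.
have gn1 : gB n1 = 1 by rewrite gBE /hBf /= rmorph0 rmorph1 mulr0 addr0.
have H2 : tensorL_zero phi (fun _ => True) [:: (ns, 1); (- n1, s)].
  have h := @flT _ _ gB gB_inj [:: (ns, 1); (- n1, s)]; apply: h => //.
  by rewrite /= gns linearN /= gn1.
move=> A b bM bL bR.
have := H2 A (fun m y => b (gB m) y).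
rewrite !big_cons !big_nil /= gns linearN /= gn1; apply.
- by move=> m m' y _; rewrite linearD bL //; apply: gBS.
- by move=> m y y' _ _; rewrite bM //; apply: gBS.
- move=> r m y _; rewrite linearZ /=.
  have -> : (r : R^c) *: (gB m : QR phi) = (gB m : Q) * phi r by [].
  by rewrite bR //; apply: gBS.
Qed.
End StepB.

Section StepA.
Variables (S : Q -> Prop) (hS : subring_over phi S) (s : Q) (hs : S s).

Definition hAf (x : (R^o * R^o)%type) : QL phi := phi x.1 + phi x.2 * s.
Lemma hAf_lin a x y : hAf (a *: x + y) = a *: hAf x + hAf y.
Proof.
case: x => x1 x2; case: y => y1 y2; rewrite /hAf /=.
change (phi ((a : R) * (x1 : R) + y1) + phi ((a : R) * (x2 : R) + y2) * s =
  phi a * (phi x1 + phi x2 * s) + (phi y1 + phi y2 * s)).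
by rewrite !rmorphD !rmorphM mulrDr mulrDl !mulrA addrACA.
Qed.
Definition hA := mklin hAf_lin.
Lemma hAU x : kersub hA x -> hA x = 0. Proof. by []. Qed.
Definition gA := qlift hAU.
Lemma gA_inj : injective gA. Proof. by apply: qlift_inj. Qed.
Lemma gAE x : gA (qpi (kersub hA) x) = hAf x.
Proof. exact: qliftE. Qed.
Lemma gAS m : S (gA m).
Proof.
case: (qpi_surj m) => [[a c] ->]; rewrite gAE /hAf /=.
apply: (S_D hS); first exact: (S_phi hS).
by apply: (S_M hS) => //; exact: (S_phi hS).
Qed.
End StepA.

Lemma rhom_facts (T : nzRingType) (S : Q -> Prop) (hS : subring_over phi S) (f : Q -> T) :
  rhom_on S f -> f 0 = 0 /\ f (- 1) = - 1.
Proof.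
case=> f1 fD.
have f0 : f 0 = 0.
  apply: add_zero; have h0 := S_0 hS; have [e _] := fD 0 0 h0 h0; by rewrite -e addr0.
split=> //.
have h1 := S_1 hS; have [e _] := fD 1 (-1) h1 (S_N hS h1).
move: e; rewrite addrN f0 f1 => /eqP; rewrite eq_sym addrC addr_eq0 => /eqP.
by [].
Qed.

Lemma epi_of (S : Q -> Prop) (hS : subring_over phi S) (flR : flat_right phi S)
  (flT : flat_left phi (fun _ => True)) :
  (forall s, S s -> Qn phi 1 s) -> ring_epi phi S.
Proof.
move=> h1 T f g hf hg hfg s hs.
have HB := stepB hS hs flT (stepC (h1 s hs)).
pose m1 := qpi (kersub (hA s)) (1, 0). pose ms := qpi (kersub (hA s)) (0, 1).
have gm1 : gA s m1 = 1 by rewrite gAE /hAf /= rmorph0 rmorph1 mul0r addr0.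
have gms : gA s ms = s by rewrite gAE /hAf /= rmorph0 rmorph1 add0r mul1r.
have HA : tensorR_zero phi S [:: (s, m1); (-1, ms)].
  have h := @flR _ _ (gA s) (gA_inj (s:=s)) [:: (s, m1); (-1, ms)]; apply: h.
    move=> p; rewrite !inE => /orP [] /eqP -> //=.
    by apply: (S_N hS); apply: (S_1 hS).
  by rewrite /= gm1 gms.
have [f0 fN1] := rhom_facts hS hf.
case: hf => f1 fD; case: hg => g1 gD.
have HT : \sum_(p <- [:: (s, m1); (-1, ms)]) f p.1 * g (gA s p.2) = 0.
  apply: (HA T (fun x m => f x * g (gA s m))).
- move=> x m m' hx; rewrite linearD /=; have [e _] := gD _ _ (gAS hS hs m) (gAS hS hs m').
  by rewrite e mulrDr.
- move=> x x' m hx hx'; have [e _] := fD _ _ hx hx'; by rewrite e mulrDl.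
- move=> r x m hx; rewrite linearZ /=.
  have -> : (r *: gA s m : QL phi) = phi r * gA s m by [].
  have [_ e] := fD _ _ hx (S_phi hS r); rewrite e hfg.
  have [_ e'] := gD _ _ (S_phi hS r) (gAS hS hs m); by rewrite e' mulrA.
move: HT; rewrite !big_cons big_nil /= gm1 gms g1 mulr1 fN1 mulN1r addr0 => /eqP.
by rewrite subr_eq0 => /eqP.
Qed.
End Main3.


Section Main4.
Variables (R Q : nzRingType) (phi : {rmorphism R -> Q}).

Definition Rsub : submod (QR phi).
Proof.
refine (@Submod _ (QR phi) (fun x => exists r, (x : Q) = phi r) _ _ _).
- by exists 0; rewrite rmorph0.
- by move=> x y [a ->] [c ->]; exists (a - c); rewrite rmorphB.
- by move=> a x [c ->]; exists (c * a); rewrite rmorphM.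
Defined.

Lemma Qomega_max (phinj : injective phi) (hC : condC phi) S' :
  flat_epi_subring phi S' -> forall q, S' q -> Qomega phi q.
Proof.
case=> hS epi flS q hq n; elim: n q hq => [|n IH] q hq //=.
pose I r := exists x, q * phi r = phi x.
have hI : right_ideal I.
  split.
  - by exists 0; rewrite !rmorph0 mulr0.
  - by move=> x y [a ea] [c ec]; exists (a - c); rewrite !rmorphB mulrBr ea ec.
  - by move=> x r [a ea]; exists (a * r); rewrite !rmorphM mulrA ea.
exists I; split; last by [].
apply/(Enext_iff (Qn_sub phinj hC n)); split=> //.
apply: (@IPin_sub _ _ _ I I S' (Qn phi n) 1 (fun x h => h) IH).
apply: (@L2 _ _ phi I hI S' hS).
pose hh : R^c^o -> qT Rsub := fun x => qpi Rsub ((q * phi x : Q) : QR phi).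
have hlin : forall a x y, hh (a *: x + y) = a *: hh x + hh y.
  move=> a x y; rewrite /hh -qpiZ -qpiD; congr qpi.
  change (q * phi ((x : R) * (a : R) + y) = q * phi x * phi a + q * phi y).
  by rewrite rmorphD rmorphM mulrDr mulrA.
pose hL := mklin hlin.
have hU : forall x, ridsub hI x -> hL x = 0.
  by move=> x [a ea]; apply/qpi_eq0; exists a.
pose g := qlift hU.
have ginj : injective g.
  by apply: qlift_inj => x /qpi_eq0 [a ea]; exists a.
have h := @flS _ _ g ginj [:: (qpi (ridsub hI) 1, 1)]; apply: h.
  by move=> p; rewrite inE => /eqP -> /=; apply: (S_1 hS).
rewrite /= qliftE.
move=> A b bA1 bA2 bR; rewrite big_seq1 /=.
have -> : mklin hlin 1 = qpi Rsub ((q : Q) : QR phi) by rewrite /hL /mklin /hh /= rmorph1 mulr1.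
pose b' := fun x y => b (qpi Rsub (x : QR phi)) y.
have := @epi_balanced _ _ phi S' hS A b'.
move=> /(_ _ _ _ epi q hq); rewrite /b' => ->.
- have -> : qpi Rsub ((1 : Q) : QR phi) = 0 by apply/qpi_eq0; exists 1; rewrite rmorph1.
  by apply: add_zero; rewrite -bA1 ?addr0.
- by move=> x x' y hx hx' hy; rewrite qpiD bA1.
- by move=> x y y' hx hy hy'; rewrite bA2.
- move=> r x y hx hy.
  have -> : qpi Rsub ((x * phi r : Q) : QR phi) = (r : R^c) *: qpi Rsub (x : QR phi) by rewrite -qpiZ.
  by rewrite bR.
Qed.
End Main4.


Section Comm.
Variables (R : comNzRingType) (Q : nzRingType) (phi : {rmorphism R -> Q}).

Lemma central (hQ : is_Qmax phi) r q : phi r * q = q * phi r.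
Proof.
case: hQ => _ hrat _.
apply/eqP; rewrite -subr_eq0; apply/negPn/negP => hp.
have [x [hx [s es]]] := hrat _ q hp.
move/negP: hx; apply.
rewrite mulrBl -!mulrA es -[phi r * phi x]rmorphM [r * x]mulrC [phi (x * r)]rmorphM mulrA es -!rmorphM.
by rewrite [s * r]mulrC subrr.
Qed.

Definition cmod (M : lmodType R) : Type := M.
HB.instance Definition _ (M : lmodType R) := GRing.Zmodule.on (cmod M).
Definition cscale (M : lmodType R) (r : R^c) (m : cmod M) : cmod M := (r : R) *: (m : M).
Lemma cscaleA (M : lmodType R) a b (v : cmod M) : cscale a (cscale b v) = cscale (a * b) v.
Proof. by rewrite /cscale scalerA mulrC. Qed.
Lemma cscale1 (M : lmodType R) : left_id 1 (@cscale M).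
Proof. by move=> v; rewrite /cscale scale1r. Qed.
Lemma cscaleDr (M : lmodType R) : right_distributive (@cscale M) +%R.
Proof. by move=> a u v; rewrite /cscale scalerDr. Qed.
Lemma cscaleDl (M : lmodType R) v : {morph (@cscale M)^~ v: a b / a + b}.
Proof. by move=> a b; rewrite /cscale scalerDl. Qed.
HB.instance Definition _ (M : lmodType R) :=
  GRing.Zmodule_isLmodule.Build R^c (cmod M) (@cscaleA M) (@cscale1 M) (@cscaleDr M) (@cscaleDl M).

Lemma condC'_of (hQ : is_Qmax phi) (hC : condC phi) : condC' phi.
Proof.
move=> S hS M N g ginj t ht H.
pose g' : cmod M -> cmod N := fun x => g x.
have hlin : forall a x y, g' (a *: x + y) = a *: g' x + g' y.
  by move=> a x y; rewrite /g' /=; exact: (linearP g).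
pose gL := mklin hlin.
have gLinj : injective gL by move=> x y /= e; apply: ginj.
pose t' := [seq ((p.2 : cmod M), p.1) | p <- t].
have Hc := @hC S hS (cmod M) (cmod N) gL gLinj t'.
have {Hc} Hc : tensorL_zero phi S t'.
  apply: Hc.
    by move=> p /mapP [p' hp' ->] /=; apply: ht.
  move=> A b bA1 bA2 bR.
  have := H A (fun x n => b n x).
  rewrite !big_map /=; apply.
  - by move=> s m m' hs; apply: bA1.
  - by move=> s s' m hs hs'; apply: bA2.
  - by move=> r s m hs; rewrite (bR r (m : cmod N) s hs) central.
move=> A b c1 c2 c3.
have := Hc A (fun n x => b x n).
rewrite big_map /=; apply.
- by move=> m m' s hs; apply: c1.
- by move=> m s s' hs hs'; apply: c2.
- by move=> r m s hs; rewrite -c3 // (central hQ).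
Qed.
End Comm.

Theorem proposition5p1 :
  (forall (R Q : nzRingType) (phi : {rmorphism R -> Q}),
      is_Qmax phi -> condC phi -> condC' phi -> is_Qtot phi (Qomega phi)) /\
  (forall (R : comNzRingType) (Q : nzRingType) (phi : {rmorphism R -> Q}),
      is_Qmax phi -> condC phi -> is_Qtot phi (Qomega phi)).
Proof.
have P1 : forall (R Q : nzRingType) (phi : {rmorphism R -> Q}),
    is_Qmax phi -> condC phi -> condC' phi -> is_Qtot phi (Qomega phi).
  move=> R Q phi hQ hC hC'.
  have phinj : injective phi by case: hQ.
  have hS := Qomega_sub phinj hC.
  split; last exact: Qomega_max.
  split=> //; last exact: hC.
  apply: epi_of => //; first exact: hC'.
    exact: (hC _ (sub_all phi)).
split; first exact: P1.
move=> R Q phi hQ hC; apply: P1 => //; exact: condC'_of.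
Qed.
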